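(* Let $G$ be a graph with $\mathrm{diam}(G)=k\ge 2$. If $F$ is a set of edges of $G$ such that $d(e,f)=k$ for all distinct $e,f\in F$, then $\mathrm{gp}(G)\ge 2|F|$.
   Context: All graphs are finite, simple and connected; $\mathrm{diam}(G)$ is the maximum distance between two vertices. For edges $e=uv$ and $f=xy$, $d(e,f)=\min\{d(u,x),d(u,y),d(v,x),d(v,y)\}$. A set of vertices is a general position set if no three of its vertices lie on a common geodesic (shortest path); $\mathrm{gp}(G)$ is the maximum cardinality of a general position set of $G$. *)

(* Defs.v *)
(* A finite simple graph is a symmetric irreflexive relation
   e : rel T on a finType T. *)
From mathcomp Require Import all_boot all_order.
Set Implicit Arguments. Unset Strict Implicit. Unset Printing Implicit Defensive.

Section Graph.
Variables (T : finType) (e : rel T).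

Definition walk_len (x y : T) (n : nat) : bool :=
  [exists p : n.-tuple T, path e x p && (last x p == y)].

(* shortest-path distance (in a connected graph every shortest walk has
   length < #|T|; the default #|T| is never reached then) *)
Definition dist (x y : T) : nat :=
  \big[minn/#|T|]_(n < #|T| | walk_len x y n) n.

Definition diam : nat := \max_(x : T) \max_(y : T) dist x y.

Definition connected_graph : Prop := forall x y : T, connect e x y.

Definition on_common_geodesic (u v w : T) : bool :=
  [exists x : T, exists y : T, exists p : (dist x y).-tuple T,
     [&& path e x p, last x p == y & all (mem (x :: tval p)) [:: u; v; w]]].

Definition gp_set (S : {set T}) : bool :=
  [forall u in S, forall v in S, forall w in S,
     [&& u != v, v != w & u != w] ==> ~~ on_common_geodesic u v w].

Definition gp : nat := \max_(S : {set T} | gp_set S) #|S|.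

Definition is_edge (A : {set T}) : bool :=
  [exists u : T, exists v : T, e u v && (A == [set u; v])].

Definition edist (A B : {set T}) : nat :=
  \big[minn/#|T|]_(x in A) \big[minn/#|T|]_(y in B) dist x y.

End Graph.

(* Main.v *)
Require Import Defs.
From mathcomp Require Import all_boot all_order.
From mathcomp Require Import zify.

Section Aux.
Variables (T : finType) (e : rel T).

Lemma bigmin_le_seq (I : eqType) (r : seq I) (P : pred I) (F : I -> nat) idx i :
  i \in r -> P i -> \big[minn/idx]_(j <- r | P j) F j <= F i.
Proof.
elim: r => // a r IH; rewrite inE big_cons => /orP[/eqP<-|ir] Pi.
  by rewrite Pi geq_minl.
by case: ifP => _; [rewrite geq_min IH ?orbT | exact: IH].
Qed.

Lemma bigmin_le (I : finType) (P : pred I) (F : I -> nat) idx i :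
  P i -> \big[minn/idx]_(j | P j) F j <= F i.
Proof. by move=> Pi; apply: bigmin_le_seq => //; rewrite mem_index_enum. Qed.

Lemma dist_le x y n : walk_len e x y n -> dist e x y <= n.
Proof.
move=> H; case: (ltnP n #|T|) => hn.
  rewrite /dist.
  have H' : walk_len e x y (Ordinal hn) by [].
  have := @bigmin_le _ (fun i : 'I_#|T| => walk_len e x y i) (fun i : 'I_#|T| => (i : nat)) #|T| _ H'.
  exact.
apply: leq_trans _ hn; rewrite /dist.
elim/big_ind: _ => //.
  by move=> a b ha hb; rewrite geq_min ha.
by move=> i _; exact: ltnW (ltn_ord i).
Qed.

Lemma walk0 x : walk_len e x x 0.
Proof. by apply/existsP; exists [tuple]; rewrite /= eqxx. Qed.

Lemma walk_pre x p j : path e x p -> j <= size p ->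
  walk_len e x (nth x (x :: p) j) j.
Proof.
move=> hp hj; apply/existsP.
have hs : size (take j p) == j by rewrite size_take_min; apply/eqP; apply/minn_idPl.
exists (Tuple hs) => /=; rewrite take_path //=.
rewrite (last_nth x) size_take_min (minn_idPl hj).
case: j hj {hs} => [|j] hj //=.
by rewrite nth_take.
Qed.

Lemma walk_sub i x p j : path e x p -> i <= j <= size p ->
  walk_len e (nth x (x :: p) i) (nth x (x :: p) j) (j - i).
Proof.
elim: i x p j => [|i IH] x p j hp.
  by rewrite subn0 /= => hj; exact: walk_pre.
case: p hp => [|y p] hp /andP [hij hjs]; first by move: hij hjs; case: j.
case: j hij hjs => [|j] hij hjs //=.
move: hp => /= /andP [_ hp].
have hi : i < size (y :: p) := leq_ltn_trans (hij : i <= j) hjs.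
have hj := hjs.
rewrite (set_nth_default y x hi) (set_nth_default y x hj) subSS.
by apply: IH => //; rewrite (hij : i <= j) (hjs : j <= size p).
Qed.

Lemma three_in_two (a b u v w : T) : u \in [set a; b] -> v \in [set a; b] ->
  w \in [set a; b] -> u != v -> v != w -> u != w -> False.
Proof.
by rewrite !inE => /orP[]/eqP-> /orP[]/eqP-> /orP[]/eqP->; rewrite ?eqxx //=.
Qed.

Lemma edist_le (A B : {set T}) (u v : T) : u \in A -> v \in B -> edist e A B <= dist e u v.
Proof.
move=> uA vB; rewrite /edist.
apply: leq_trans (@bigmin_le _ (fun x => x \in A) (fun x => \big[minn/#|T|]_(y in B) dist e x y) _ _ uA) _.
exact: (@bigmin_le _ (fun y => y \in B) (fun y => dist e u y) _ _ vB).
Qed.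

Lemma dist_le_diam x y : dist e x y <= diam e.
Proof.
rewrite /diam.
apply: (leq_trans (@leq_bigmax _ (fun y => dist e x y) y)).
exact: (@leq_bigmax _ (fun x => \max_y dist e x y) x).
Qed.

End Aux.

Definition gapP (k x y : nat) := (x <= y -> k <= y - x) /\ (y <= x -> k <= x - y).

Lemma gapP_sym k x y : gapP k x y -> gapP k y x.
Proof. by case=> h1 h2; split. Qed.

Lemma arith (N k a b c : nat) : N <= k -> 2 <= k -> a <= N -> b <= N -> c <= N ->
  b <> c -> gapP k a b -> gapP k a c -> False.
Proof. rewrite /gapP; lia. Qed.
Arguments arith {N k a b c}.
Arguments gapP_sym {k x y}.
Arguments edist_le {T e A B u v}.
Arguments dist_le {T e x y n}.
Arguments walk0 {T} e x.
Arguments walk_sub {T e} i {x p} j.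
Arguments three_in_two {T a b u v w}.
Arguments dist_le_diam {T} e x y.

Theorem proposition4p4 (T : finType) (e : rel T) (k : nat) (F : {set {set T}}) :
  symmetric e -> irreflexive e -> connected_graph e ->
  diam e = k -> 2 <= k ->
  (forall A, A \in F -> is_edge e A) ->
  (forall A B, A \in F -> B \in F -> A != B -> edist e A B = k) ->
  2 * #|F| <= gp e.
Proof.
move=> esym eirr _ hdiam hk hedge hdist.
set S := cover F.
have hcard : #|S| = 2 * #|F|.
  have triv : trivIset F.
    apply/trivIsetP => A B AF BF AB; rewrite disjoints_subset; apply/subsetP => z zA; rewrite inE; apply/negP => zB.
    have := hdist A B AF BF AB.
    have := leq_trans (edist_le zA zB) (dist_le (walk0 e z)).
    lia.
  rewrite /S -(eqP triv) (eq_bigr (fun _ => 2)); first by rewrite sum_nat_const mulnC.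
  move=> A AF; have /existsP [a /existsP [b /andP [hab /eqP ->]]] := hedge A AF.
  rewrite cards2; case: eqP => // hab'; by rewrite hab' eirr in hab.
rewrite -hcard; rewrite /gp.
apply: (leq_bigmax_cond (F := fun S : {set T} => #|S|)).
apply/forall_inP => u uS; apply/forall_inP => v vS; apply/forall_inP => w wS.
apply/implyP => /and3P [uv vw uw].
apply/negP => /existsP [x /existsP [y /existsP [p /and3P [hp hl hall]]]].
move: hall => /= /and4P [hu hv hw _].
set s := x :: tval p.
have hN : dist e x y <= k by rewrite -hdiam; exact: dist_le_diam.
have hsz : size s = (dist e x y).+1 by rewrite /s /= size_tuple.
have ind_lt a : a \in s -> index a s <= dist e x y.
  by move=> ha; rewrite -ltnS -hsz index_mem.
have gap a b A B : a \in s -> b \in s -> A \in F -> B \in F -> a \in A -> b \in B ->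
    A != B -> (index a s <= index b s -> k <= index b s - index a s) /\
              (index b s <= index a s -> k <= index a s - index b s).
  move=> ha hb AF BF aA bB AB.
  have ia : index a s <= size p by rewrite -ltnS -[(size p).+1]/(size s) index_mem.
  have ib : index b s <= size p by rewrite -ltnS -[(size p).+1]/(size s) index_mem.
  split=> hij.
    have := walk_sub (index a s) (index b s) hp; rewrite hij ib => /(_ isT).
    rewrite -/s !nth_index // => /dist_le H; apply: leq_trans H.
    by rewrite -(hdist A B) // edist_le.
  have := walk_sub (index b s) (index a s) hp; rewrite hij ia => /(_ isT).
  rewrite -/s !nth_index // => /dist_le H; apply: leq_trans H.
  by rewrite -(hdist B A) 1?eq_sym // edist_le.
have dif a b : a \in s -> a != b -> index a s <> index b s.
  move=> ha ab hi; move/eqP: ab; apply.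
  by rewrite -(nth_index x ha) hi nth_index // -index_mem -hi index_mem.
have duv := dif _ _ hu uv; have dvw := dif _ _ hv vw; have duw := dif _ _ hu uw.
have iu := ind_lt _ hu; have iv := ind_lt _ hv; have iw := ind_lt _ hw.
move/bigcupP: uS => [Au AuF uA].
move/bigcupP: vS => [Av AvF vA].
move/bigcupP: wS => [Aw AwF wA].
have G a b A B ha hb AF BF aA bB AB : gapP k (index a s) (index b s) :=
  gap a b A B ha hb AF BF aA bB AB.
case: (eqVneq Au Av) => [e1|n1].
  case: (eqVneq Av Aw) => [e2|n2].
    have /existsP [a /existsP [b /andP [_ /eqP hA]]] := hedge Au AuF.
    subst Av Aw; rewrite hA in uA vA wA.
    exact: (three_in_two uA vA wA uv vw uw).
  case: (eqVneq Au Aw) => [e3|n3].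
    by rewrite -e1 e3 eqxx in n2.
  exact: (arith hN hk iw iv iu (nesym duv) (gapP_sym (G _ _ _ _ hv hw AvF AwF vA wA n2))
     (gapP_sym (G _ _ _ _ hu hw AuF AwF uA wA n3))).
case: (eqVneq Av Aw) => [e2|n2].
  case: (eqVneq Au Aw) => [e3|n3].
    by rewrite e2 e3 eqxx in n1.
  exact: (arith hN hk iu iv iw dvw (G _ _ _ _ hu hv AuF AvF uA vA n1)
     (G _ _ _ _ hu hw AuF AwF uA wA n3)).
exact: (arith hN hk iv iu iw duw (gapP_sym (G _ _ _ _ hu hv AuF AvF uA vA n1))
     (G _ _ _ _ hv hw AvF AwF vA wA n2)).
Qed.
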